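(* For every $r>0$ there is a constant $C_r$ depending only on $r$ such that for every finite connected undirected unweighted graph $G=(V,E)$ with $n$ vertices and every initial mutant set $S_0\subseteq V$, the expected absorption time of the $\lambda$-mixed Moran process with $\lambda=1/2$ and fitness $r$ started from $S_0$ is at most $C_r n^4$ (i.e., it is $O_r(n^4)$).
   Context: The $\lambda$-mixed Moran process on a connected graph $G=(V,E)$ with $n=|V|\ge 2$: each vertex hosts a resident (fitness $1$) or mutant (fitness $r>0$); the state is the mutant set $S_t\subseteq V$. Each step, independently: with probability $\lambda$ a Birth-death step (a vertex $u$ chosen with probability proportional to fitness among all vertices; a uniformly random neighbor of $u$ takes $u$'s type); with probability $1-\lambda$ a death-Birth step (a uniformly random vertex $v$ dies; a neighbor $u$ of $v$ chosen with probability proportional to fitness among the neighbors of $v$; $v$ takes $u$'s type). The absorption time is the expected number of steps until $S_t\in\{\emptyset,V\}$. *)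

(* Defs.v *)
(* finite graphs as symmetric irreflexive relations on a finType. *)
From HB Require Import structures.
From mathcomp Require Import all_boot all_order all_algebra.
From mathcomp Require Export reals.
Set Implicit Arguments. Unset Strict Implicit. Unset Printing Implicit Defensive.
Import Order.TTheory GRing.Theory Num.Theory.
Local Open Scope ring_scope.

Section Moran.
Variables (R : realType) (V : finType) (e : rel V).

Definition fit (r : R) (S : {set V}) (x : V) : R := if x \in S then r else 1.

Definition upd (S : {set V}) (v : V) (b : bool) : {set V} :=
  if b then v |: S else S :\ v.

Definition nbrs (u : V) : {set V} := [set w | e u w].

Definition trans (lam r : R) (S S' : {set V}) : R :=
  lam * (\sum_(u : V) \sum_(v : V | e u v)
           (fit r S u / \sum_(w : V) fit r S w) * (#|nbrs u|%:R)^-1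
           * (S' == upd S v (u \in S))%:R)
  + (1 - lam) * (\sum_(v : V) \sum_(u : V | e v u)
           (#|V|%:R)^-1 * (fit r S u / \sum_(w : V | e v w) fit r S w)
           * (S' == upd S v (u \in S))%:R).

Fixpoint dist (lam r : R) (S0 : {set V}) (t : nat) (S' : {set V}) : R :=
  match t with
  | 0 => (S' == S0)%:R
  | t.+1 => \sum_(S : {set V}) dist lam r S0 t S * trans lam r S S'
  end.

Definition absorbing (S : {set V}) : bool := (S == set0) || (S == setT).

(* sum_{t<N} P(T > t) = sum_{t<N} P(S_t not absorbed); the expected absorption
   time is the supremum over N of these partial sums *)
Definition partial_abs_time (lam r : R) (S0 : {set V}) (N : nat) : R :=
  \sum_(t < N) \sum_(S : {set V} | ~~ absorbing S) dist lam r S0 t S.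

End Moran.

(* Main.v *)
Require Import Defs.
From HB Require Import structures.
From mathcomp Require Import all_boot all_order all_algebra.
From mathcomp Require Import reals.
From mathcomp Require Import ring lra.
Import Order.TTheory GRing.Theory Num.Theory.
Local Open Scope ring_scope.

Lemma dist_ge0 (R : realType) (V : finType) (e : rel V) (lam r : R) S0 :
  (forall S S', 0 <= trans e lam r S S') ->
  forall t S, 0 <= dist e lam r S0 t S.
Proof.
move=> htr; elim=> [|t IH] S /=; first by rewrite ler0n.
by apply: sumr_ge0 => S' _; apply: mulr_ge0.
Qed.

Lemma hitting (R : realType) (V : finType) (e : rel V) (lam r : R) S0
   (phi : {set V} -> R) :
  (forall S S', 0 <= trans e lam r S S') ->
  (forall S, 0 <= phi S) ->
  (forall S, \sum_S' trans e lam r S S' * phi S' <= phi S - (~~ absorbing S)%:R) ->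
  forall N, partial_abs_time e lam r S0 N <= phi S0.
Proof.
move=> htr hphi hdr N.
pose Phi t := \sum_S dist e lam r S0 t S * phi S.
have key : forall N, partial_abs_time e lam r S0 N + Phi N <= phi S0.
  elim=> [|M IH].
    rewrite /partial_abs_time big_ord0 add0r /Phi /=.
    rewrite (bigD1 S0) //= eqxx mul1r big1 ?addr0 // => S /negbTE ->.
    by rewrite mul0r.
  rewrite /partial_abs_time big_ord_recr /=.
  set P := \sum_(S | ~~ absorbing S) dist e lam r S0 M S.
  set A := \sum_(i < M) _.
  have h1 : Phi M.+1 <= Phi M - P.
    have -> : Phi M.+1 = \sum_S dist e lam r S0 M S *
         (\sum_S' trans e lam r S S' * phi S').
      rewrite /Phi /=.
      under eq_bigr do rewrite big_distrl /=.
      rewrite exchange_big /=; apply: eq_bigr => S _.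
      by rewrite big_distrr /=; apply: eq_bigr => S' _; rewrite mulrA.
    apply: (@le_trans _ _ (\sum_S dist e lam r S0 M S * (phi S - (~~ absorbing S)%:R))).
      by apply: ler_sum => S _; apply: ler_wpM2l; [apply: dist_ge0|apply: hdr].
    rewrite /Phi.
    under eq_bigr do rewrite mulrBr.
    rewrite sumrB [X in _ - X](bigID (fun S => ~~ absorbing S)) /=.
    rewrite [X in _ - (_ + X)]big1; last by move=> S /negPn ->; rewrite mulr0.
    rewrite addr0 /P.
    by rewrite le_eqVlt; apply/orP; left; apply/eqP; congr (_ - _); apply: eq_bigr => S ->; rewrite mulr1.
  change (A + P + Phi M.+1 <= phi S0).
  rewrite /partial_abs_time -/A in IH.
  lra.
have := key N; have : 0 <= Phi N.
  by apply: sumr_ge0 => S _; apply: mulr_ge0; [apply: dist_ge0|apply: hphi].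
move=> h1 h2; apply: le_trans h2; by rewrite lerDl.
Qed.

Lemma sum_ind (R : realType) (T : finType) (phi : T -> R) (c : R) (X : T) :
  \sum_S' c * (S' == X)%:R * phi S' = c * phi X.
Proof.
rewrite (bigD1 X) //= eqxx mulr1 big1 ?addr0 // => S /negbTE ->.
by rewrite mulr0 mul0r.
Qed.

Lemma sum2_ind (R : realType) (T U : finType) (P : U -> U -> bool)
   (phi : T -> R) (c : U -> U -> R) (X : U -> U -> T) :
  \sum_S' (\sum_u \sum_(v | P u v) c u v * (S' == X u v)%:R) * phi S'
  = \sum_u \sum_(v | P u v) c u v * phi (X u v).
Proof.
under eq_bigr do rewrite big_distrl /=.
rewrite exchange_big /=; apply: eq_bigr => u _.
under eq_bigr do rewrite big_distrl /=.
rewrite exchange_big /=; apply: eq_bigr => v _.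
exact: sum_ind.
Qed.

Lemma trans_exp (R : realType) (V : finType) (e : rel V) (lam r : R)
  (S : {set V}) (phi : {set V} -> R) :
  \sum_S' trans e lam r S S' * phi S' =
  lam * (\sum_(u : V) \sum_(v : V | e u v)
           (fit r S u / \sum_(w : V) fit r S w) * (#|nbrs e u|%:R)^-1
           * phi (upd S v (u \in S)))
  + (1 - lam) * (\sum_(v : V) \sum_(u : V | e v u)
           (#|V|%:R)^-1 * (fit r S u / \sum_(w : V | e v w) fit r S w)
           * phi (upd S v (u \in S))).
Proof.
rewrite /trans.
under eq_bigr do rewrite mulrDl -!mulrA.
rewrite big_split /= -!big_distrr /=.
congr (_ * _ + _ * _).
  by rewrite sum2_ind.
by rewrite sum2_ind.
Qed.

Lemma path_cross (V : finType) (e : rel V) (S : {set V}) x p :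
  path e x p -> x \in S -> last x p \notin S ->
  exists a b, [/\ a \in S, b \notin S & e a b].
Proof.
elim: p x => [|y p IH] x /=; first by move=> _ ->.
case/andP=> exy hp xS hl.
case yS: (y \in S); first exact: (IH y hp yS hl).
by exists x, y; rewrite xS yS exy.
Qed.

Lemma boundary (V : finType) (e : rel V) (S : {set V}) :
  (forall x y : V, connect e x y) -> ~~ absorbing S ->
  exists a b, [/\ a \in S, b \notin S & e a b].
Proof.
move=> hc; rewrite /absorbing negb_or => /andP[h0 hT].
have [x xS] : exists x, x \in S.
  by case/set0Pn: h0 => x; exists x.
have [y yS] : exists y, y \notin S.
  case: (pickP (fun y => y \notin S)) => [y hy|h]; first by exists y.
  have hS : S = setT by apply/setP => z; move: (h z) => /= /negbFE ->; rewrite inE.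
  by rewrite hS eqxx in hT.
case/connectP: (hc x y) => p hp hy.
by apply: (@path_cross _ _ S _ _ hp xS); rewrite -hy.
Qed.

Lemma nbr_exists (V : finType) (e : rel V) :
  (forall x y : V, connect e x y) -> (2 <= #|V|)%N -> forall v, exists w, e v w.
Proof.
move=> hc h2 v.
have [y hy] : exists y, y != v.
  case: (pickP (fun y => y != v)) => [y hyy|h]; first by exists y.
  have : (#|V| <= 1)%N by rewrite -(card1 v); apply/subset_leq_card/subsetP => z _; move: (h z) => /negbFE; rewrite inE.
  by rewrite leqNgt h2.
case/connectP: (hc v y) => [[|w p]] /=; first by move=> _ hyv; rewrite hyv eqxx in hy.
by case/andP=> hvw _ _; exists w.
Qed.

Lemma swap2 (R : realType) (V : finType) (e : rel V) (G : V -> V -> R) :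
  symmetric e ->
  \sum_u \sum_(v | e u v) G u v = \sum_u \sum_(v | e u v) G v u.
Proof.
move=> hs; rewrite (exchange_big_dep xpredT) //=.
by apply: eq_bigr => u _; apply: eq_bigl => v; rewrite hs.
Qed.

Lemma card_nbrs (R : realType) (V : finType) (e : rel V) v :
  (#|nbrs e v|%:R : R) = \sum_(w | e v w) 1.
Proof.
by rewrite sumr_const /nbrs cardsE.
Qed.


Lemma inv_le (R : realType) (s t x y : R) :
  0 < x -> 0 < y -> s * x <= t * y -> s * y^-1 <= t * x^-1.
Proof.
move=> hx hy h.
rewrite -subr_ge0.
have -> : t * x^-1 - s * y^-1 = (t * y - s * x) / (x * y) :> R.
  by field; rewrite !gt_eqF.
by apply: divr_ge0; [rewrite subr_ge0 | apply: mulr_ge0; apply: ltW].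
Qed.

Lemma T_pos (R : realType) (r W n dp dq Fp Fq : R) :
  0 < W -> 0 < n -> 0 < dp -> 0 < dq -> 0 < Fp -> 0 < Fq ->
  1 <= r -> n <= W -> W <= r * n -> dp <= Fp -> Fq <= r * dq ->
  0 <= r / W / dp + n^-1 * (r / Fq) - 1 / W / dq - n^-1 * (1 / Fp).
Proof.
move=> hW hn hdp hdq hFp hFq hr h1 h2 h3 h4.
have e1 : 1 * n^-1 <= r * W^-1.
  by apply: inv_le => //; rewrite mul1r.
have e2 : 1 * W^-1 <= 1 * n^-1.
  by apply: inv_le => //; rewrite !mul1r.
have e3 : 1 * dq^-1 <= r * Fq^-1.
  by apply: inv_le => //; rewrite mul1r.
have e4 : 1 * Fp^-1 <= 1 * dp^-1.
  by apply: inv_le => //; rewrite !mul1r.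
rewrite !mul1r in e1 e2 e3 e4.
have idp : 0 <= dp^-1 by rewrite invr_ge0 ltW.
have idq : 0 <= dq^-1 by rewrite invr_ge0 ltW.
have iN : 0 <= n^-1 by rewrite invr_ge0 ltW.
have f1 := ler_wpM2r idp e1.
have f2 := ler_wpM2r idq e2.
have f3 := ler_wpM2l iN e3.
have f4 := ler_wpM2l iN e4.
rewrite !mul1r.
lra.
Qed.

Lemma T_neg (R : realType) (r W n dp dq Fp Fq : R) :
  0 < W -> 0 < n -> 0 < dp -> 0 < dq -> 0 < Fp -> 0 < Fq ->
  r <= 1 -> r * n <= W -> W <= n -> Fp <= dp -> r * dq <= Fq ->
  r / W / dp + n^-1 * (r / Fq) - 1 / W / dq - n^-1 * (1 / Fp) <= 0.
Proof.
move=> hW hn hdp hdq hFp hFq hr h1 h2 h3 h4.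
have e1 : r * W^-1 <= 1 * n^-1.
  by apply: inv_le => //; rewrite mul1r.
have e2 : 1 * n^-1 <= 1 * W^-1.
  by apply: inv_le => //; rewrite !mul1r.
have e3 : r * Fq^-1 <= 1 * dq^-1.
  by apply: inv_le => //; rewrite mul1r.
have e4 : 1 * dp^-1 <= 1 * Fp^-1.
  by apply: inv_le => //; rewrite !mul1r.
rewrite !mul1r in e1 e2 e3 e4.
have idp : 0 <= dp^-1 by rewrite invr_ge0 ltW.
have idq : 0 <= dq^-1 by rewrite invr_ge0 ltW.
have iN : 0 <= n^-1 by rewrite invr_ge0 ltW.
have f1 := ler_wpM2r idp e1.
have f2 := ler_wpM2r idq e2.
have f3 := ler_wpM2l iN e3.
have f4 := ler_wpM2l iN e4.
rewrite !mul1r.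
lra.
Qed.

Lemma pair_bound (R : realType) (K x c ap aq bqp bpq : R) :
  0 <= K -> 0 <= ap -> 0 <= aq -> 0 <= bpq ->
  0 <= (x - c) * (ap + bqp - aq - bpq) ->
  ap * (- K * (2 * (x - c) + 1)) + aq * (K * (2 * (x - c) - 1))
  + bqp * (- K * (2 * (x - c) + 1)) + bpq * (K * (2 * (x - c) - 1))
  <= - (K * bqp).
Proof.
move=> hK hap haq hbpq hD.
have h1 := mulr_ge0 hK hD.
have h2 := mulr_ge0 hK hap.
have h3 := mulr_ge0 hK haq.
have h4 := mulr_ge0 hK hbpq.
nra.
Qed.

Definition al (R : realType) (V : finType) (e : rel V) (r : R) (S : {set V}) (u : V) : R :=
  fit r S u / (\sum_(w : V) fit r S w) / #|nbrs e u|%:R.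
Definition be (R : realType) (V : finType) (e : rel V) (r : R) (S : {set V}) (v u : V) : R :=
  (#|V|%:R)^-1 * (fit r S u / \sum_(w : V | e v w) fit r S w).

Arguments al {R V}.
Arguments be {R V}.

Lemma trans_exp2 (R : realType) (V : finType) (e : rel V) (lam r : R)
  (S : {set V}) (phi : {set V} -> R) :
  \sum_S' trans e lam r S S' * phi S' =
  lam * (\sum_(u : V) \sum_(v : V | e u v) al e r S u * phi (upd S v (u \in S)))
  + (1 - lam) * (\sum_(v : V) \sum_(u : V | e v u) be e r S v u * phi (upd S v (u \in S))).
Proof. exact: trans_exp. Qed.

Lemma fit_gt0 (R : realType) (V : finType) (r : R) S (w : V) : 0 < r -> 0 < fit r S w.
Proof. by rewrite /fit; case: (w \in S). Qed.

Lemma card_V (R : realType) (V : finType) : (#|V|%:R : R) = \sum_(w : V) 1.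
Proof. by rewrite sumr_const cardT. Qed.

Lemma sum_ge_term (R : realType) (V : finType) (P : pred V) (f : V -> R) x :
  P x -> (forall w, 0 <= f w) -> f x <= \sum_(w | P w) f w.
Proof.
move=> Px hf; rewrite (bigD1 x) //= lerDl.
by apply: sumr_ge0 => w _; apply: hf.
Qed.

Lemma W_gt0 (R : realType) (V : finType) (r : R) S (x : V) :
  0 < r -> 0 < \sum_(w : V) fit r S w.
Proof.
move=> hr; apply: (lt_le_trans (@fit_gt0 _ _ r S x hr)).
by apply: (@sum_ge_term _ _ xpredT) => // w; apply/ltW/fit_gt0.
Qed.

Lemma F_gt0 (R : realType) (V : finType) (e : rel V) (r : R) S (v x : V) :
  0 < r -> e v x -> 0 < \sum_(w : V | e v w) fit r S w.
Proof.
move=> hr hx; apply: (lt_le_trans (@fit_gt0 _ _ r S x hr)).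
by apply: (@sum_ge_term _ _ (e v)) => // w; apply/ltW/fit_gt0.
Qed.

Lemma d_gt0 (R : realType) (V : finType) (e : rel V) (v x : V) :
  e v x -> 0 < (#|nbrs e v|%:R : R).
Proof.
move=> hx; rewrite card_nbrs; apply: (lt_le_trans (@ltr01 R)).
by apply: (@sum_ge_term _ _ (e v) (fun _ => 1) x) => // w.
Qed.

Lemma mass_al (R : realType) (V : finType) (e : rel V) (r : R) S (x0 : V) :
  0 < r -> (forall v : V, exists w, e v w) ->
  \sum_u \sum_(v | e u v) al e r S u = 1.
Proof.
move=> hr hn.
have hW (u : V) : 0 < \sum_(w : V) fit r S w by exact: (@W_gt0 _ _ r S u hr).
have -> : \sum_u \sum_(v | e u v) al e r S u = \sum_u fit r S u / \sum_(w : V) fit r S w.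
  apply: eq_bigr => u _.
  case: (hn u) => x hx.
  rewrite -[X in \sum_(_ | _) X]mulr1 -mulr_sumr -card_nbrs /al divfK //.
  by rewrite gt_eqF // (@d_gt0 R V e u x hx).
by rewrite -mulr_suml divff // gt_eqF // (hW x0).
Qed.

Lemma mass_be (R : realType) (V : finType) (e : rel V) (r : R) S :
  0 < r -> (forall v : V, exists w, e v w) -> (2 <= #|V|)%N ->
  \sum_v \sum_(u | e v u) be e r S v u = 1.
Proof.
move=> hr hn h2.
have -> : \sum_v \sum_(u | e v u) be e r S v u = \sum_(v : V) (#|V|%:R)^-1.
  apply: eq_bigr => v _.
  case: (hn v) => x hx.
  rewrite /be -mulr_sumr -mulr_suml divff ?mulr1 //.
  by rewrite gt_eqF // (@F_gt0 R V e r S v x hr hx).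
rewrite -[X in \sum_(_ : _) X]mulr1 -mulr_sumr -card_V mulVf //.
by rewrite pnatr_eq0 -lt0n (leq_trans _ h2).
Qed.

Definition gf (R : realType) (K c n y : R) := K * (n ^+ 2 - (y - c) ^+ 2).
Arguments gf {R}.

Lemma delta (R : realType) (V : finType) (K c n : R) (S : {set V}) (u v : V) :
  gf K c n (#|upd S v (u \in S)|%:R) =
  gf K c n (#|S|%:R) + ((u \in S) && (v \notin S))%:R * (- K * (2 * (#|S|%:R - c) + 1))
   + ((u \notin S) && (v \in S))%:R * (K * (2 * (#|S|%:R - c) - 1)).
Proof.
rewrite /upd /gf; case uS: (u \in S) => /=.
  rewrite cardsU1; case vS: (v \in S) => /=; rewrite ?add0n ?natrD; ring.
rewrite (cardsD1 v S); case vS: (v \in S) => /=; rewrite ?add0n ?natrD ?setD1K //=; try ring.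
Qed.

Lemma split3 (R : realType) (V : finType) (P : V -> V -> bool) (w f1 f2 : V -> V -> R) (g : R) :
  \sum_u \sum_(v | P u v) w u v = 1 ->
  \sum_u \sum_(v | P u v) w u v * (g + f1 u v + f2 u v) =
  g + \sum_u \sum_(v | P u v) w u v * f1 u v + \sum_u \sum_(v | P u v) w u v * f2 u v.
Proof.
move=> h1.
have -> : \sum_u \sum_(v | P u v) w u v * (g + f1 u v + f2 u v) =
   \sum_u ((\sum_(v | P u v) w u v) * g + \sum_(v | P u v) w u v * f1 u v
        + \sum_(v | P u v) w u v * f2 u v).
  apply: eq_bigr => u _; rewrite mulr_suml -!big_split /=.
  by apply: eq_bigr => v _; rewrite !mulrDr.
by rewrite !big_split /= -mulr_suml h1 mul1r.
Qed.

Lemma al_ge0 (R : realType) (V : finType) (e : rel V) (r : R) S u :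
  0 < r -> 0 <= al e r S u.
Proof.
move=> hr; rewrite /al; apply: divr_ge0; last exact: ler0n.
apply: divr_ge0; first exact/ltW/fit_gt0.
by apply: sumr_ge0 => w _; apply/ltW/fit_gt0.
Qed.

Lemma be_ge0 (R : realType) (V : finType) (e : rel V) (r : R) S v u :
  0 < r -> 0 <= be e r S v u.
Proof.
move=> hr; rewrite /be; apply: mulr_ge0; first by rewrite invr_ge0 ler0n.
apply: divr_ge0; first exact/ltW/fit_gt0.
by apply: sumr_ge0 => w _; apply/ltW/fit_gt0.
Qed.

Lemma drift (R : realType) (V : finType) (e : rel V) (r : R)
  (hs : symmetric e) (hn : forall v : V, exists w, e v w)
  (hcon : forall x y : V, connect e x y) (h2 : (2 <= #|V|)%N) (hr : 0 < r)
  (K c : R) (hK : 0 <= K)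
  (hsign : forall (S : {set V}) p q, p \in S -> q \notin S -> e p q ->
     0 <= (#|S|%:R - c) * (al e r S p + be e r S q p - al e r S q - be e r S p q))
  (hlow : forall (S : {set V}) p q, p \in S -> q \notin S -> e p q -> 2 <= K * be e r S q p)
  (S : {set V}) :
  \sum_S' trans e (2^-1) r S S' * gf K c (#|V|%:R) (#|S'|%:R)
    <= gf K c (#|V|%:R) (#|S|%:R) - (~~ absorbing S)%:R.
Proof.
have [x0 _] : exists x0 : V, true.
  by case/card_gt0P: (leq_trans (isT : (0 < 2)%N) h2) => y _; exists y.
set n : R := #|V|%:R.
set x : R := #|S|%:R.
pose h := - K * (2 * (x - c) + 1).
pose k := K * (2 * (x - c) - 1).
rewrite (@trans_exp2 R V e (2^-1) r S (fun S' => gf K c n #|S'|%:R)) /=.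
under eq_bigr => u _ do under eq_bigr => v _ do rewrite delta.
under [X in _ + _ * X]eq_bigr => u _ do under eq_bigr => v _ do rewrite delta.
rewrite (@split3 R V (fun u v => e u v) (fun u v => al e r S u)
   (fun u v => ((u \in S) && (v \notin S))%:R * h)
   (fun u v => ((u \notin S) && (v \in S))%:R * k)); last exact: mass_al.
rewrite (@split3 R V (fun u v => e u v) (fun u v => be e r S u v)
   (fun u v => ((v \in S) && (u \notin S))%:R * h)
   (fun u v => ((v \notin S) && (u \in S))%:R * k)); last exact: mass_be.
pose G p q := ((p \in S) && (q \notin S))%:R *
   (al e r S p * h + al e r S q * k + be e r S q p * h + be e r S p q * k).
set A1 := \sum_u \sum_(v | e u v) al e r S u * (((u \in S) && (v \notin S))%:R * h).
set A2 := \sum_u \sum_(v | e u v) al e r S u * (((u \notin S) && (v \in S))%:R * k).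
set B1 := \sum_u \sum_(v | e u v) be e r S u v * (((v \in S) && (u \notin S))%:R * h).
set B2 := \sum_u \sum_(v | e u v) be e r S u v * (((v \notin S) && (u \in S))%:R * k).
have hsum : A1 + A2 + B1 + B2 = \sum_p \sum_(q | e p q) G p q.
  rewrite /A2 /B1 (@swap2 R V e (fun u v => al e r S u * (((u \notin S) && (v \in S))%:R * k))) //.
  rewrite (@swap2 R V e (fun u v => be e r S u v * (((v \in S) && (u \notin S))%:R * h))) //=.
  rewrite -!big_split /=; apply: eq_bigr => p _.
  rewrite -!big_split /=; apply: eq_bigr => q _.
  rewrite /G; case: (p \in S); case: (q \in S) => /=; ring.
have hG0 : forall p q, e p q -> G p q <= - ((p \in S) && (q \notin S))%:R * 2.
  move=> p q hpq; rewrite /G.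
  case pS: (p \in S); case qS: (q \in S) => /=; try by rewrite !(mul0r, mulr0, oppr0).
  rewrite mul1r mulN1r.
  apply: le_trans (_ : - (K * be e r S q p) <= - 2); last first.
    by rewrite lerN2; apply: hlow => //; rewrite qS.
  apply: pair_bound => //.
  - by apply: al_ge0.
  - by apply: al_ge0.
  - by apply: be_ge0.
  - by apply: hsign => //; rewrite qS.
have hG : \sum_p \sum_(q | e p q) G p q <= - (~~ absorbing S)%:R * 2.
  case abs: (absorbing S) => /=.
    rewrite oppr0 mul0r; apply: sumr_le0 => p _; apply: sumr_le0 => q hpq.
    by apply: le_trans (hG0 p q hpq) _; rewrite mulNr oppr_le0 mulr_ge0 ?ler0n.
  have [p0 [q0 [hp0 hq0 he0]]] := @boundary V e S hcon (negbT abs).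
  rewrite (bigD1 p0) //= (bigD1 q0) //=.
  have r1 : \sum_(q | e p0 q && (q != q0)) G p0 q <= 0.
    apply: sumr_le0 => q /andP[hq _]; apply: le_trans (hG0 p0 q hq) _.
    by rewrite mulNr oppr_le0 mulr_ge0 ?ler0n.
  have r2 : \sum_(p | p != p0) \sum_(q | e p q) G p q <= 0.
    apply: sumr_le0 => p _; apply: sumr_le0 => q hq; apply: le_trans (hG0 p q hq) _.
    by rewrite mulNr oppr_le0 mulr_ge0 ?ler0n.
  have r3 := hG0 p0 q0 he0; rewrite hp0 hq0 /= in r3.
  lra.
have h12 : (1 - 2^-1 : R) = 2^-1 by field.
rewrite h12 /x; move: hG; rewrite -hsum; lra.
Qed.

Lemma trans_ge0 (R : realType) (V : finType) (e : rel V) (lam r : R) S S' :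
  0 < r -> 0 <= lam -> lam <= 1 -> 0 <= trans e lam r S S'.
Proof.
move=> hr h0 h1; rewrite /trans.
have hf w : 0 <= fit r S w by apply/ltW/fit_gt0.
apply: addr_ge0; apply: mulr_ge0; rewrite ?subr_ge0 //;
  apply: sumr_ge0 => a _; apply: sumr_ge0 => b _;
  apply: mulr_ge0; rewrite ?ler0n //; apply: mulr_ge0; rewrite ?invr_ge0 ?ler0n //;
  apply: divr_ge0 => //; by apply: sumr_ge0.
Qed.

Lemma sum_lb (R : realType) (V : finType) (P : pred V) (a : R) (f : V -> R) :
  (forall w, a <= f w) -> a * \sum_(w | P w) 1 <= \sum_(w | P w) f w.
Proof. by move=> h; rewrite mulr_sumr; apply: ler_sum => w _; rewrite mulr1. Qed.

Lemma sum_ub (R : realType) (V : finType) (P : pred V) (a : R) (f : V -> R) :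
  (forall w, f w <= a) -> \sum_(w | P w) f w <= a * \sum_(w | P w) 1.
Proof. by move=> h; rewrite mulr_sumr; apply: ler_sum => w _; rewrite mulr1. Qed.

Lemma sum_sub (R : realType) (V : finType) (P : pred V) (f : V -> R) :
  (forall w, 0 <= f w) -> \sum_(w | P w) f w <= \sum_w f w.
Proof.
move=> h; rewrite [X in _ <= X](bigID P) /= lerDl.
by apply: sumr_ge0 => w _.
Qed.

Theorem mainTheorem5 (R : realType) (r : R) (hr : 0 < r) :
  exists C : R,
    forall (V : finType) (e : rel V),
      symmetric e -> irreflexive e ->
      (forall x y : V, connect e x y) ->
      (2 <= #|V|)%N ->
      forall (S0 : {set V}) (N : nat),
        partial_abs_time e (2^-1) r S0 N <= C * (#|V|%:R) ^+ 4.
Proof.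
exists (2 * (1 + r) / r).
move=> V e hs hi hcon h2 S0 N.
have hn := @nbr_exists V e hcon h2.
set C := 2 * (1 + r) / r.
set n : R := #|V|%:R.
have hn0 : 0 < n by rewrite /n ltr0n (leq_trans _ h2).
have hC : 0 < C by rewrite /C divr_gt0 // mulr_gt0 // ltr_wpDr // ltW.
set K := C * n ^+ 2.
have hK : 0 <= K by rewrite /K; apply: mulr_ge0; [exact: ltW | exact: exprn_ge0 (ltW hn0)].
set c : R := if 1 <= r then 0 else n.
have hx (S : {set V}) : 0 <= (#|S|%:R : R) <= n.
  by rewrite ler0n /= /n ler_nat; apply: max_card.
have hphi (S : {set V}) : 0 <= gf K c n (#|S|%:R) <= K * n ^+ 2.
  have /andP[x0 x1] := hx S.
  rewrite /gf; apply/andP; split.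
    apply: mulr_ge0 => //; rewrite subr_ge0 /c; case: ifP => _.
      have h1 : 0 <= n - #|S|%:R by rewrite subr_ge0.
      have h3 : 0 <= n + #|S|%:R by rewrite addr_ge0 // ltW.
      have := mulr_ge0 h1 h3; nra.
    have h1 : 0 <= 2 * n - #|S|%:R by rewrite subr_ge0; lra.
    have := mulr_ge0 x0 h1; nra.
  rewrite -subr_ge0 -mulrBr; apply: mulr_ge0 => //.
  have := sqr_ge0 (#|S|%:R - c); lra.
have hfit1 : 1 <= r -> forall (S : {set V}) w, 1 <= fit r S w <= r.
  by move=> h S w; rewrite /fit; case: ifP => _; rewrite ?lexx ?h.
have hfit2 : r <= 1 -> forall (S : {set V}) w, r <= fit r S w <= 1.
  by move=> h S w; rewrite /fit; case: ifP => _; rewrite ?lexx ?h.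
have hfitM : forall (S : {set V}) w, fit r S w <= 1 + r.
  by move=> S w; rewrite /fit; case: ifP => _; rewrite ?lerDr ?lerDl ltW.
have hsign : forall (S : {set V}) p q, p \in S -> q \notin S -> e p q ->
     0 <= (#|S|%:R - c) * (al e r S p + be e r S q p - al e r S q - be e r S p q).
  move=> S p q pS qS hpq.
  have fp : fit r S p = r by rewrite /fit pS.
  have fq : fit r S q = 1 by rewrite /fit (negbTE qS).
  have hqp : e q p by rewrite hs.
  have hW := @W_gt0 R V r S p hr.
  have hFp := @F_gt0 R V e r S p q hr hpq.
  have hFq := @F_gt0 R V e r S q p hr hqp.
  have hdp := @d_gt0 R V e p q hpq.
  have hdq := @d_gt0 R V e q p hqp.
  rewrite /al /be fp fq -/n.
  have /andP[x0 x1] := hx S.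
  rewrite /c; case: ifP => h1.
    rewrite subr0; apply: mulr_ge0 => //.
    apply: T_pos => //.
    - rewrite /n card_V -[X in X <= _]mul1r; apply: sum_lb => w; by case/andP: (hfit1 h1 S w).
    - rewrite /n card_V; apply: sum_ub => w; by case/andP: (hfit1 h1 S w).
    - rewrite card_nbrs -[X in X <= _]mul1r; apply: sum_lb => w; by case/andP: (hfit1 h1 S w).
    - rewrite card_nbrs; apply: sum_ub => w; by case/andP: (hfit1 h1 S w).
  have h1' : r <= 1 by rewrite ltW // ltNge h1.
  apply: mulr_le0; first by rewrite subr_le0.
  apply: T_neg => //.
  - rewrite /n card_V; apply: sum_lb => w; by case/andP: (hfit2 h1' S w).
  - rewrite /n card_V -[X in _ <= X]mul1r; apply: sum_ub => w; by case/andP: (hfit2 h1' S w).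
  - rewrite card_nbrs -[X in _ <= X]mul1r; apply: sum_ub => w; by case/andP: (hfit2 h1' S w).
  - rewrite card_nbrs; apply: sum_lb => w; by case/andP: (hfit2 h1' S w).
have hlow : forall (S : {set V}) p q, p \in S -> q \notin S -> e p q -> 2 <= K * be e r S q p.
  move=> S p q pS qS hpq.
  have fp : fit r S p = r by rewrite /fit pS.
  have hqp : e q p by rewrite hs.
  have hFq := @F_gt0 R V e r S q p hr hqp.
  rewrite /be fp -/n.
  set Fq := \sum_(w | e q w) fit r S w in hFq *.
  have hFqb : Fq <= (1 + r) * n.
    apply: le_trans (_ : \sum_w fit r S w <= _).
      by apply: sum_sub => w; apply/ltW/fit_gt0.
    by rewrite /n card_V; apply: sum_ub.
  have -> : K * (n^-1 * (r / Fq)) = (2 * (1 + r) * n) / Fq.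
    rewrite /K /C; field; rewrite !gt_eqF //.
  rewrite ler_pdivlMr //; lra.
apply: le_trans (@hitting R V e (2^-1) r S0 (fun S => gf K c n #|S|%:R) _ _ _ N) _.
- move=> S S'; apply: trans_ge0 => //; first by rewrite invr_ge0.
  by rewrite invf_le1 // ler1n.
- by move=> S; case/andP: (hphi S).
- move=> S; exact: (@drift R V e r hs hn hcon h2 hr K c hK hsign hlow S).
case/andP: (hphi S0) => _ /le_trans; apply.
by rewrite /K -mulrA -exprD.
Qed.
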